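(* Let $G,H$ be groups, $\omega_G,\omega_H$ normalized 3-cocycles with values in $\mathbb F^\times$, and $\omega((g_1,h_1),(g_2,h_2),(g_3,h_3)):=\omega_G(g_1,g_2,g_3)\,\omega_H^{-1}(h_3^{-1},h_2^{-1},h_1^{-1})$. Fix a $G\times H$-set $X$. The assignments $\mathcal B(X,\Psi,\Phi,\Omega)\mapsto\mathcal M(X,\Gamma')$ and $\mathcal M(X,\Gamma)\mapsto\mathcal B(X,\tilde\Psi,\tilde\Phi,\tilde\Omega)$, where $$\Gamma'((g_1,h_1),(g_2,h_2),x)=\Psi(g_1,g_2,(h_2^{-1}h_1^{-1})\cdot x)\,\Phi(h_1,h_2,x)\,\Omega(g_1,h_2,h_1^{-1}\cdot x),$$ $$\tilde\Psi(g_1,g_2,x)=\Gamma((g_1,1),(g_2,1),x),\ \tilde\Phi(h_1,h_2,x)=\Gamma((1,h_1),(1,h_2),x),\ \tilde\Omega(g,h,x)=\Gamma((g,1),(1,h),x),$$ are well defined and mutually inverse bijections between the semisimple $(\mathrm{Vec}_G^{\omega_G},\mathrm{Vec}_H^{\omega_H})$-bimodule categories of the form $\mathcal B(X,\Psi,\Phi,\Omega)$ and the semisimple $\mathrm{Vec}_{G\times H}^\omega$-module categories of the form $\mathcal M(X,\Gamma)$.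
   Context: $\mathbb F$ algebraically closed; $\mathrm{Vec}_K^\eta$ as usual (finite-dimensional $K$-graded spaces, $\delta^k\otimes\delta^{k'}=\delta^{kk'}$, associator $\eta$). In the $G\times H$-set $X$ write $g\cdot x=(g,1)\cdot x$ and $h\cdot x=(1,h)\cdot x$. The data $\mathcal B(X,\Psi,\Phi,\Omega)$: normalized maps $\Psi:G\times G\times X\to\mathbb F^\times$, $\Phi:H\times H\times X\to\mathbb F^\times$, $\Omega:G\times H\times X\to\mathbb F^\times$ with $\Psi(g_2,g_3,g_1^{-1}\cdot x)\Psi^{-1}(g_1g_2,g_3,x)\Psi(g_1,g_2g_3,x)\Psi^{-1}(g_1,g_2,x)=\omega_G^{-1}(g_1,g_2,g_3)$; $\Phi(h_2,h_3,h_1^{-1}\cdot x)\Phi^{-1}(h_1h_2,h_3,x)\Phi(h_1,h_2h_3,x)\Phi^{-1}(h_1,h_2,x)=\omega_H(h_3^{-1},h_2^{-1},h_1^{-1})$; $\Omega(g_2,h,g_1^{-1}\cdot x)\Omega^{-1}(g_1g_2,h,x)\Omega(g_1,h,x)=\Psi(g_1,g_2,x)\Psi^{-1}(g_1,g_2,h^{-1}\cdot x)$; $\Omega(g,h_2,h_1^{-1}\cdot x)\Omega^{-1}(g,h_1h_2,x)\Omega(g,h_1,x)=\Phi^{-1}(h_1,h_2,x)\Phi(h_1,h_2,g^{-1}\cdot x)$. The bimodule category $\mathcal B(X,\Psi,\Phi,\Omega)$ is the category of finite-dimensional $X$-graded spaces with $\delta^g\triangleright x=g\cdot x$, $x\triangleleft\delta^h=h^{-1}\cdot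 x$, left constraint $m_{g_1,g_2,x}=\Psi(g_1,g_2,(g_1g_2)\cdot x)\mathrm{id}$, right constraint $n_{x,h_1,h_2}=\Phi(h_2^{-1},h_1^{-1},(h_1h_2)^{-1}\cdot x)\mathrm{id}:x\triangleleft(\delta^{h_1}\otimes\delta^{h_2})\to(x\triangleleft\delta^{h_1})\triangleleft\delta^{h_2}$, and middle constraint $b_{g,x,h}=\Omega(g,h^{-1},(g,h^{-1})\cdot x)\mathrm{id}:(\delta^g\triangleright x)\triangleleft\delta^h\to\delta^g\triangleright(x\triangleleft\delta^h)$. The data $\mathcal M(X,\Gamma)$: normalized $\Gamma:(G\times H)^2\times X\to\mathbb F^\times$ with $\Gamma(u_2,u_3,u_1^{-1}\cdot x)\Gamma^{-1}(u_1u_2,u_3,x)\Gamma(u_1,u_2u_3,x)\Gamma^{-1}(u_1,u_2,x)=\omega^{-1}(u_1,u_2,u_3)$ and additionally $\Gamma((1,h),(g,1),x)=1$ for all $g,h,x$; $\mathcal M(X,\Gamma)$ is the $\mathrm{Vec}_{G\times H}^\omega$-module category of $X$-graded spaces with $\delta^u\triangleright x=u\cdot x$ and constraint $\Gamma(u,v,(uv)\cdot x)\mathrm{id}$. *)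

(* Defs.v *)
From HB Require Import structures.
From mathcomp Require Import all_boot all_algebra.
From mathcomp Require Import fingroup.

Set Implicit Arguments.
Unset Strict Implicit.
Unset Printing Implicit Defensive.

Import GRing.Theory.
Local Open Scope ring_scope.

Section Defs.

Variable F : fieldType.

Definition pmul (G H : groupType) (u v : G * H) : G * H :=
  ((u.1 * v.1)%g, (u.2 * v.2)%g).
Definition pone (G H : groupType) : G * H := (1%g, 1%g).
Definition pinv (G H : groupType) (u : G * H) : G * H := ((u.1)^-1%g, (u.2)^-1%g).

Definition is_GH_action (G H : groupType) (X : Type) (act : G * H -> X -> X) :=
  (forall x, act (pone G H) x = x) /\
  (forall u v x, act (pmul u v) x = act u (act v x)).

Definition normalized_3cocycle (G : groupType) (w : G -> G -> G -> F) :=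
  (forall a b c, w a b c != 0) /\
  (forall a b, w 1%g a b = 1 /\ w a 1%g b = 1 /\ w a b 1%g = 1) /\
  (forall g1 g2 g3 g4,
      w g2 g3 g4 * w g1 (g2 * g3)%g g4 * w g1 g2 g3
      = w (g1 * g2)%g g3 g4 * w g1 g2 (g3 * g4)%g).

Definition omega_prod (G H : groupType) (wG : G -> G -> G -> F)
  (wH : H -> H -> H -> F) (u1 u2 u3 : G * H) : F :=
  wG u1.1 u2.1 u3.1 * (wH (u3.2)^-1%g (u2.2)^-1%g (u1.2)^-1%g)^-1.

Definition is_B_data (G H : groupType) (wG : G -> G -> G -> F)
  (wH : H -> H -> H -> F) (X : Type) (act : G * H -> X -> X)
  (Psi : G -> G -> X -> F) (Phi : H -> H -> X -> F) (Omega : G -> H -> X -> F) :=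
  let gact (g : G) x := act (g, 1%g) x in
  let hact (h : H) x := act (1%g, h) x in
  ((forall g1 g2 x, Psi g1 g2 x != 0) /\
      (forall h1 h2 x, Phi h1 h2 x != 0) /\
      (forall g h x, Omega g h x != 0)) /\
  ((forall g x, Psi 1%g g x = 1 /\ Psi g 1%g x = 1) /\
      (forall h x, Phi 1%g h x = 1 /\ Phi h 1%g x = 1) /\
      (forall g h x, Omega 1%g h x = 1 /\ Omega g 1%g x = 1)) /\
  [/\ (forall g1 g2 g3 x,
         Psi g2 g3 (gact (g1^-1)%g x) * (Psi (g1 * g2)%g g3 x)^-1
         * Psi g1 (g2 * g3)%g x * (Psi g1 g2 x)^-1 = (wG g1 g2 g3)^-1),
      (forall h1 h2 h3 x,
         Phi h2 h3 (hact (h1^-1)%g x) * (Phi (h1 * h2)%g h3 x)^-1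
         * Phi h1 (h2 * h3)%g x * (Phi h1 h2 x)^-1
         = wH (h3^-1)%g (h2^-1)%g (h1^-1)%g),
      (forall g1 g2 h x,
         Omega g2 h (gact (g1^-1)%g x) * (Omega (g1 * g2)%g h x)^-1
         * Omega g1 h x = Psi g1 g2 x * (Psi g1 g2 (hact (h^-1)%g x))^-1) &
      (forall g h1 h2 x,
         Omega g h2 (hact (h1^-1)%g x) * (Omega g (h1 * h2)%g x)^-1
         * Omega g h1 x = (Phi h1 h2 x)^-1 * Phi h1 h2 (gact (g^-1)%g x))].

Definition is_M_data (G H : groupType) (wG : G -> G -> G -> F)
  (wH : H -> H -> H -> F) (X : Type) (act : G * H -> X -> X)
  (Gamma : G * H -> G * H -> X -> F) :=
  [/\ (forall u v x, Gamma u v x != 0),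
      (forall u x, Gamma (pone G H) u x = 1 /\ Gamma u (pone G H) x = 1),
      (forall u1 u2 u3 x,
         Gamma u2 u3 (act (pinv u1) x) * (Gamma (pmul u1 u2) u3 x)^-1
         * Gamma u1 (pmul u2 u3) x * (Gamma u1 u2 x)^-1
         = (omega_prod wG wH u1 u2 u3)^-1) &
      (forall (g : G) (h : H) x, Gamma (1%g, h) (g, 1%g) x = 1)].

Definition Gamma_of_B (G H : groupType) (X : Type) (act : G * H -> X -> X)
  (Psi : G -> G -> X -> F) (Phi : H -> H -> X -> F) (Omega : G -> H -> X -> F)
  (u1 u2 : G * H) (x : X) : F :=
  Psi u1.1 u2.1 (act (1%g, ((u2.2)^-1 * (u1.2)^-1)%g) x)
  * Phi u1.2 u2.2 x
  * Omega u1.1 u2.2 (act (1%g, (u1.2)^-1%g) x).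

Definition Psi_of_M (G H : groupType) (X : Type) (Gamma : G * H -> G * H -> X -> F)
  (g1 g2 : G) (x : X) : F := Gamma (g1, 1%g) (g2, 1%g) x.
Definition Phi_of_M (G H : groupType) (X : Type) (Gamma : G * H -> G * H -> X -> F)
  (h1 h2 : H) (x : X) : F := Gamma (1%g, h1) (1%g, h2) x.
Definition Omega_of_M (G H : groupType) (X : Type) (Gamma : G * H -> G * H -> X -> F)
  (g : G) (h : H) (x : X) : F := Gamma (g, 1%g) (1%g, h) x.

End Defs.

(* Main.v *)
Require Import Defs.
From HB Require Import structures.
From mathcomp Require Import all_boot all_algebra.
From mathcomp Require Import fingroup.
From mathcomp Require Import ring.
Import GRing.Theory.
Local Open Scope ring_scope.

Lemma actM {G H : groupType} {X : Type} {act : G * H -> X -> X}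
  (hact : is_GH_action act) u v x :
  act u (act v x) = act ((u.1 * v.1)%g, (u.2 * v.2)%g) x.
Proof. by rewrite -(hact.2 u v x). Qed.

Lemma act1 {G H : groupType} {X : Type} {act : G * H -> X -> X}
  (hact : is_GH_action act) x : act (1%g, 1%g) x = x.
Proof. exact: (hact.1 x). Qed.

Lemma wN1 {F : fieldType} {G : groupType} {w : G -> G -> G -> F}
  (hw : normalized_3cocycle w) a b : w 1%g a b = 1.
Proof. by case: (hw.2.1 a b). Qed.
Lemma wN2 {F : fieldType} {G : groupType} {w : G -> G -> G -> F}
  (hw : normalized_3cocycle w) a b : w a 1%g b = 1.
Proof. by case: (hw.2.1 a b) => _ []. Qed.
Lemma wN3 {F : fieldType} {G : groupType} {w : G -> G -> G -> F}
  (hw : normalized_3cocycle w) a b : w a b 1%g = 1.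
Proof. by case: (hw.2.1 a b) => _ []. Qed.

Lemma cross4 {F : fieldType} {a b c d r : F} :
  b != 0 -> d != 0 -> a * b^-1 * c * d^-1 = r -> a * c = r * b * d.
Proof. move=> hb hd <-. field. by rewrite hb hd. Qed.

Lemma solve4 {F : fieldType} {a b c d e : F} :
  b != 0 -> c != 0 -> d != 0 -> a * b^-1 * c * d^-1 = e -> a = e * b * d / c.
Proof. move=> hb hc hd <-. field. by rewrite hb hc hd. Qed.

Lemma solve3 {F : fieldType} {a b c e : F} :
  b != 0 -> c != 0 -> a * b^-1 * c = e -> a = e * b / c.
Proof. move=> hb hc <-. field. by rewrite hb hc. Qed.

Lemma solve2 {F : fieldType} {a b c : F} :
  b != 0 -> a * b = c -> a = c / b.
Proof. move=> hb <-. field. by rewrite hb. Qed.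

Ltac nrm hact := rewrite /= ?(actM hact) /= ?(invg1, mul1g, mulg1, invMg, mulgA) ?(act1 hact).


Lemma Mcoc {F : fieldType} {G H : groupType}
  {wG : G -> G -> G -> F} {wH : H -> H -> H -> F}
  {X : Type} {act : G * H -> X -> X} {Gamma : G * H -> G * H -> X -> F}
  (hM : is_M_data wG wH act Gamma) u1 u2 u3 x :
  Gamma u2 u3 (act (pinv u1) x) * Gamma u1 (pmul u2 u3) x
  = (omega_prod wG wH u1 u2 u3)^-1 * Gamma (pmul u1 u2) u3 x * Gamma u1 u2 x.
Proof. case: hM => nz _ c _; apply: cross4; [exact: nz | exact: nz | exact: c]. Qed.

Lemma Mdec (F : fieldType) (G H : groupType)
  (wG : G -> G -> G -> F) (wH : H -> H -> H -> F)
  (hwG : normalized_3cocycle wG) (hwH : normalized_3cocycle wH)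
  (X : Type) (act : G * H -> X -> X) (hact : is_GH_action act)
  (Gamma : G * H -> G * H -> X -> F)
  (hM : is_M_data wG wH act Gamma) g1 h1 g2 h2 x :
  Gamma (g1, h1) (g2, h2) x =
  Gamma (g1, 1%g) (g2, 1%g) (act (1%g, ((h2^-1) * (h1^-1))%g) x)
  * Gamma (1%g, h1) (1%g, h2) x
  * Gamma (g1, 1%g) (1%g, h2) (act (1%g, (h1^-1)%g) x).
Proof.
have hmix : forall g h x, Gamma (1%g, h) (g, 1%g) x = 1 by case: hM.
have S1 := Mcoc hM (1%g, h1) (g1, 1%g) (g2, h2) x.
have S2 := Mcoc hM (1%g, h1) (1%g, h2) ((g1 * g2)%g, 1%g) x.
have S3 := Mcoc hM (g1, 1%g) (1%g, h2) (g2, 1%g) (act (1%g, (h1^-1)%g) x).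
have S4 := Mcoc hM (1%g, h2) (g1, 1%g) (g2, 1%g) (act (1%g, (h1^-1)%g) x).
move: S1 S2 S3 S4; rewrite /pinv /pmul /omega_prod.
nrm hact.
rewrite ?hmix ?(wN1 hwG, wN2 hwG, wN3 hwG, wN1 hwH, wN2 hwH, wN3 hwH, invr1, mul1r, mulr1).
move=> S1 S2 S3 S4.
rewrite -S1 S2 S3 -S4. ring.
Qed.
Arguments Mdec {F G H wG wH} hwG hwH {X act} hact {Gamma} hM.

Theorem proposition4p27 (F : closedFieldType) (G H : groupType)
  (wG : G -> G -> G -> F) (wH : H -> H -> H -> F)
  (hwG : normalized_3cocycle wG) (hwH : normalized_3cocycle wH)
  (X : Type) (act : G * H -> X -> X) (hact : is_GH_action act) :
  (* well defined: B-data go to M-data *)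
  (forall Psi Phi Omega,
     is_B_data wG wH act Psi Phi Omega ->
     is_M_data wG wH act (Gamma_of_B act Psi Phi Omega)) /\
  (* well defined: M-data go to B-data *)
  (forall Gamma,
     is_M_data wG wH act Gamma ->
     is_B_data wG wH act (Psi_of_M Gamma) (Phi_of_M Gamma) (Omega_of_M Gamma)) /\
  (* B -> M -> B is the identity *)
  (forall Psi Phi Omega,
     is_B_data wG wH act Psi Phi Omega ->
     (forall g1 g2 x, Psi_of_M (Gamma_of_B act Psi Phi Omega) g1 g2 x = Psi g1 g2 x) /\
     (forall h1 h2 x, Phi_of_M (Gamma_of_B act Psi Phi Omega) h1 h2 x = Phi h1 h2 x) /\
     (forall g h x, Omega_of_M (Gamma_of_B act Psi Phi Omega) g h x = Omega g h x)) /\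
  (* M -> B -> M is the identity *)
  (forall Gamma,
     is_M_data wG wH act Gamma ->
     forall u v x,
       Gamma_of_B act (Psi_of_M Gamma) (Phi_of_M Gamma) (Omega_of_M Gamma) u v x
       = Gamma u v x).
Proof.
have nzG : forall a b c, wG a b c != 0 by case: hwG.
have nzH : forall a b c, wH a b c != 0 by case: hwH.
split.
  move=> Psi Phi Omega [[nzPsi [nzPhi nzOm]] [[nPsi [nPhi nOm]] [e1 e2 e3 e4]]].
  split.
  - move=> [g1 h1] [g2 h2] x; rewrite /Gamma_of_B /=.
    by rewrite !mulf_neq0.
  - move=> [g h] x; rewrite /Gamma_of_B /=.
    split; nrm hact.
      by rewrite (nPsi _ _).1 (nPhi _ _).1 (nOm _ _ _).1 ?mulr1 ?mul1r.
    by rewrite (nPsi _ _).2 (nPhi _ _).2 (nOm _ _ _).2 ?mulr1 ?mul1r.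
  - move=> [g1 h1] [g2 h2] [g3 h3] x.
    have E1 := e1 g1 g2 g3 (act (1%g, (h3^-1 * h2^-1 * h1^-1)%g) x).
    have E2 := e2 h1 h2 h3 x.
    have E3 := e3 g1 g2 h3 (act (1%g, (h2^-1 * h1^-1)%g) x).
    have E4 := e4 g1 h2 h3 (act (1%g, (h1^-1)%g) x).
    move: E1 E2 E3 E4; rewrite /Gamma_of_B /pinv /pmul /omega_prod.
    nrm hact.
    move=> /(solve4 (nzPsi _ _ _) (nzPsi _ _ _) (nzPsi _ _ _)) E1.
    move=> /(solve4 (nzPhi _ _ _) (nzPhi _ _ _) (nzPhi _ _ _)) E2.
    move=> /(solve3 (nzOm _ _ _) (nzOm _ _ _)) E3.
    move=> /(solve3 (nzOm _ _ _) (nzOm _ _ _)) E4.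
    rewrite E1 E3 E4 E2.
    field.
    by rewrite ?(nzG, nzH, nzPsi, nzPhi, nzOm).
  - move=> g h x; rewrite /Gamma_of_B /=.
    by rewrite (nPsi _ _).1 (nPhi _ _).2 (nOm _ _ _).1 ?mulr1 ?mul1r.
split.
  move=> Gamma hM.
  have hM' := hM.
  case: hM' => nz n1 c hmix.
  have G1l : forall u x, Gamma (1%g, 1%g) u x = 1 by move=> u y; exact: (n1 u y).1.
  have G1r : forall u x, Gamma u (1%g, 1%g) x = 1 by move=> u y; exact: (n1 u y).2.
  rewrite /Psi_of_M /Phi_of_M /Omega_of_M.
  split.
    split; [by []|split; by []].
  split.
    split; [move=> *; split; [exact: G1l|exact: G1r]|].
    split; [move=> *; split; [exact: G1l|exact: G1r]|].
    by move=> *; split; [exact: G1l|exact: G1r].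
  split.
  - move=> g1 g2 g3 x.
    have := c (g1, 1%g) (g2, 1%g) (g3, 1%g) x.
    rewrite /pinv /pmul /omega_prod; nrm hact.
    by rewrite ?(wN1 hwG, wN2 hwG, wN3 hwG, wN1 hwH, wN2 hwH, wN3 hwH, invr1, mul1r, mulr1).
  - move=> h1 h2 h3 x.
    have := c (1%g, h1) (1%g, h2) (1%g, h3) x.
    rewrite /pinv /pmul /omega_prod; nrm hact.
    by rewrite ?(wN1 hwG, wN2 hwG, wN3 hwG, wN1 hwH, wN2 hwH, wN3 hwH, invr1, mul1r, mulr1, invrK).
  - move=> g1 g2 h x.
    have S := Mcoc hM (g1, 1%g) (g2, 1%g) (1%g, h) x.
    have D := Mdec hwG hwH hact hM g1 1%g g2 h x.
    move: S D; rewrite /pinv /pmul /omega_prod; nrm hact.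
    rewrite ?(G1l, G1r, wN1 hwG, wN2 hwG, wN3 hwG, wN1 hwH, wN2 hwH, wN3 hwH, invr1, mul1r, mulr1).
    move=> S D; rewrite D in S.
    move: S => /(solve2 (mulf_neq0 (nz _ _ _) (nz _ _ _))) ->.
    field.
    by rewrite ?nz.
  - move=> g h1 h2 x.
    have S := Mcoc hM (g, 1%g) (1%g, h1) (1%g, h2) x.
    have D := Mdec hwG hwH hact hM g h1 1%g h2 x.
    move: S D; rewrite /pinv /pmul /omega_prod; nrm hact.
    rewrite ?(G1l, G1r, wN1 hwG, wN2 hwG, wN3 hwG, wN1 hwH, wN2 hwH, wN3 hwH, invr1, mul1r, mulr1).
    move=> S D; rewrite D in S.
    move: S => /(solve2 (nz _ _ _)) ->.
    field.
    by rewrite ?nz.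
split.
  move=> Psi Phi Omega [_ [[nPsi [nPhi nOm]] _]].
  have P1 : forall g x, Psi 1%g g x = 1 by move=> g y; case: (nPsi g y).
  have P2 : forall g x, Psi g 1%g x = 1 by move=> g y; case: (nPsi g y).
  have Q1 : forall h x, Phi 1%g h x = 1 by move=> h y; case: (nPhi h y).
  have Q2 : forall h x, Phi h 1%g x = 1 by move=> h y; case: (nPhi h y).
  have O1 : forall h x, Omega 1%g h x = 1 by move=> h y; case: (nOm 1%g h y).
  have O2 : forall g x, Omega g 1%g x = 1 by move=> g y; case: (nOm g 1%g y).
  rewrite /Psi_of_M /Phi_of_M /Omega_of_M /Gamma_of_B.
  split; [|split]; move=> a b y; nrm hact;
    by rewrite ?(P1, P2, Q1, Q2, O1, O2, mulr1, mul1r).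
move=> Gamma hM [g1 h1] [g2 h2] x.
rewrite /Psi_of_M /Phi_of_M /Omega_of_M /Gamma_of_B /=.
symmetry; exact: (Mdec hwG hwH hact hM).
Qed.
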